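(* Let $d\ge1$, $\ell\ge 2$, and let $u,v$ be vertices of the cyclic Kautz digraph $CK(d,\ell)$. There is a directed path from $u$ to $v$ in $CK(d,\ell)$ if and only if $v$ can be obtained from $u$ by a finite sequence of the following operations: (i) rotation, replacing $a_1a_2\ldots a_\ell$ by $a_2\ldots a_\ell a_1$; (ii) valid swap, replacing a single symbol $a_i$ by a symbol $x\in\Sigma$ that differs from both cyclic neighbours $a_{i-1}$ and $a_{i+1}$ (indices taken cyclically modulo $\ell$).
   Context: Let $\Sigma=\{0,1,\dots,d\}$. The cyclic Kautz digraph $CK(d,\ell)$ has as vertices all sequences $a_1\ldots a_\ell\in\Sigma^\ell$ with $a_i\neq a_{i+1}$ for $1\le i\le \ell-1$ and $a_1\neq a_\ell$, with an arc from $a_1\ldots a_\ell$ to $b_1\ldots b_\ell$ iff both are vertices and $b_i=a_{i+1}$ for $1\le i\le\ell-1$. Both operations map vertices of $CK(d,\ell)$ to vertices of $CK(d,\ell)$ (a vertex can be viewed as a cyclic arrangement of symbols on a disc with a marked starting position; rotation moves the marked position). *)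

(* Defs.v *)
From mathcomp Require Import all_boot.
From Stdlib Require Import Relations.
Set Implicit Arguments. Unset Strict Implicit. Unset Printing Implicit Defensive.

(* Alphabet Sigma = {0,...,d}; words of length l are seq nat. *)
Definition in_alphabet (d : nat) (s : seq nat) : bool := all (fun a => a <= d) s.

Definition ck_vertex (d l : nat) (s : seq nat) : Prop :=
  size s = l /\ in_alphabet d s /\
  (forall i, i < l -> nth 0 s i <> nth 0 s ((i + 1) %% l)).

Definition ck_arc (d l : nat) (u v : seq nat) : Prop :=
  ck_vertex d l u /\ ck_vertex d l v /\
  (forall i, i < l.-1 -> nth 0 v i = nth 0 u i.+1).

Definition ck_path (d l : nat) : relation (seq nat) := clos_refl_trans _ (ck_arc d l).

Definition rotation_op (u v : seq nat) : Prop := v = rot 1 u.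

Definition swap_op (d l : nat) (u v : seq nat) : Prop :=
  exists i x, i < l /\ x <= d /\
    x <> nth 0 u ((i + l - 1) %% l) /\ x <> nth 0 u ((i + 1) %% l) /\
    v = set_nth 0 u i x.

Definition ck_op (d l : nat) (u v : seq nat) : Prop :=
  rotation_op u v \/ swap_op d l u v.

Definition ck_reach_ops (d l : nat) : relation (seq nat) := clos_refl_trans _ (ck_op d l).

(* Main.v *)
Require Import Defs.
From mathcomp Require Import all_boot zify.
From Stdlib Require Import Relations.
Set Implicit Arguments.
Lemma mod_wrap (a l : nat) : l <= a -> a < l + l -> a %% l = a - l.
Proof.
move=> h1 h2; have -> : a = (a - l) + l by lia.
rewrite modnDr modn_small; lia.
Qed.
Lemma nth_rot (s : seq nat) n i : n <= size s -> i < size s ->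
  nth 0 (rot n s) i = nth 0 s ((i + n) %% size s).
Proof.
move=> hn hi; rewrite /rot nth_cat size_drop.
case: ltnP => h.
  rewrite nth_drop modn_small; [by rewrite addnC | lia].
rewrite nth_take; last by lia.
rewrite mod_wrap; [|lia|lia].
have -> : i + n - size s = i - (size s - n) by lia.
done.
Qed.
Lemma vertex_alt d l s : 2 <= l -> ck_vertex d l s <->
  [/\ size s = l, in_alphabet d s,
      (forall i, i.+1 < l -> nth 0 s i <> nth 0 s i.+1)
      & nth 0 s l.-1 <> nth 0 s 0].
Proof.
move=> hl; split.
  case=> [hs [ha hc]]; split=> //.
    by move=> i hi; have := hc i (ltnW hi); rewrite modn_small addn1 //.
  have hl1 : l.-1 < l by lia.
  have := hc l.-1 hl1.
  have -> : l.-1 + 1 = l by lia. by rewrite modnn.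
case=> hs ha hc hlast; split=> //; split=> // i hi.
case: (ltnP i.+1 l) => h.
  by rewrite modn_small addn1 //; apply: hc.
have -> : i = l.-1 by lia. have -> : l.-1 + 1 = l by lia. by rewrite modnn.
Qed.
Lemma rcons_vertex d l s x : 2 <= l -> ck_vertex d l s -> x <= d ->
  x <> nth 0 s 1 -> x <> nth 0 s l.-1 ->
  ck_vertex d l (rcons (behead s) x) /\ ck_arc d l s (rcons (behead s) x).
Proof.
move=> hl hs hx h1 h2.
have hv : ck_vertex d l (rcons (behead s) x).
  have hs' := hs.
  case/(@vertex_alt d l _ hl): hs' => sz ha hc hlast.
  apply/(@vertex_alt d l _ hl); split.
  - by rewrite size_rcons size_behead sz; lia.
  - rewrite /in_alphabet all_rcons hx /=.
    by case: s sz ha {hs hc hlast h1 h2} => [|a t] //= _ /andP[].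
  - move=> i hi; rewrite !nth_rcons !size_behead sz.
    have -> : i < l.-1 by lia.
    case: ltnP => h.
      rewrite !nth_behead; apply: hc; lia.
    have -> : i.+1 == l.-1 by apply/eqP; lia.
    rewrite nth_behead => e; apply: h2; rewrite -e.
    have -> : i.+1 = l.-1 by lia. done.
  - rewrite !nth_rcons !size_behead sz ltnn eqxx.
    have -> : 0 < l.-1 by lia.
    by rewrite nth_behead => e; apply: h1.
split=> //; split=> //; split=> // i hi.
rewrite nth_rcons size_behead.
case: hs => -> _. by rewrite hi nth_behead.
Qed.
Lemma rot1_vertex d l s : 2 <= l -> ck_vertex d l s ->
  ck_vertex d l (rot 1 s) /\ ck_arc d l s (rot 1 s).
Proof.
move=> hl hs.
have hs' := hs; case/(@vertex_alt d l _ hl): hs' => sz ha hc hlast.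
have -> : rot 1 s = rcons (behead s) (nth 0 s 0).
  case: s {hs ha hc hlast} sz => [|a t] szz; first by rewrite /= in szz; lia.
  by rewrite rot1_cons.
apply: (@rcons_vertex d l s _ hl hs).
- case: s {hs hc hlast} sz ha => [|a t] /= e; first by lia.
  by case/andP.
- by apply: hc.
- by move=> e; apply: hlast; rewrite e.
Qed.

Lemma rot_path d l s k : 2 <= l -> ck_vertex d l s -> k <= l ->
  ck_vertex d l (rot k s) /\ ck_path d l s (rot k s).
Proof.
move=> hl hs; elim: k => [|k IH] hk.
  by rewrite rot0; split=> //; apply: rt_refl.
have [hv hp] := IH (ltnW hk).
have hsz : size s = l by case: hs.
have -> : rot k.+1 s = rot 1 (rot k s) by rewrite -rotD // add1n hsz.
have [hv' ha] := @rot1_vertex d l (rot k s) hl hv.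
split=> //; apply: rt_trans hp _; exact: rt_step.
Qed.

Lemma set_nth_rcons (t : seq nat) a b : set_nth 0 (rcons t a) (size t) b = rcons t b.
Proof. by elim: t => //= c t ->. Qed.

Lemma swap_path d l u i x : 2 <= l -> ck_vertex d l u -> i < l -> x <= d ->
  x <> nth 0 u ((i + l - 1) %% l) -> x <> nth 0 u ((i + 1) %% l) ->
  ck_vertex d l (set_nth 0 u i x) /\ ck_path d l u (set_nth 0 u i x).
Proof.
move=> hl hu hi hx h1 h2.
have hsz : size u = l by case: hu.
have [hr hpr] := @rot_path d l u i hl hu (ltnW hi).
have e1 : nth 0 (rot i u) 1 = nth 0 u ((i + 1) %% l).
  by rewrite nth_rot ?hsz ?(ltnW hi) // addnC.
have e2 : nth 0 (rot i u) l.-1 = nth 0 u ((i + l - 1) %% l).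
  rewrite nth_rot ?hsz ?(ltnW hi) //; last by lia.
  have -> : l.-1 + i = i + l - 1 by lia. done.
have g1 : x <> nth 0 (rot i u) 1 by rewrite e1.
have g2 : x <> nth 0 (rot i u) l.-1 by rewrite e2.
have [hw' haw] := @rcons_vertex d l (rot i u) x hl hr hx g1 g2.
set w := set_nth 0 u i x.
have ew : rcons (behead (rot i u)) x = rot i.+1 w.
  rewrite /w set_nthE hsz hi -cat_rcons.
  have -> : i.+1 = size (rcons (take i u) x) by rewrite size_rcons size_take hsz hi.
  rewrite rot_size_cat /rot (drop_nth 0) ?hsz //= rcons_cat.
  by rewrite size_rcons size_take hsz hi.
rewrite ew in hw' haw.
have [hv2 hp2] := @rot_path d l _ (l - i.+1) hl hw' (leq_subr _ _).
have hwsz : size w = l by rewrite /w size_set_nth hsz; apply/maxn_idPr.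
rewrite -rotD in hv2 hp2; last by rewrite hwsz; lia.
have hw : l - i.+1 + i.+1 = size w by rewrite hwsz; lia.
rewrite hw rot_size in hv2 hp2.
split=> //.
apply: rt_trans hpr _; apply: rt_trans (rt_step _ _ _ _ haw) hp2.
Qed.
Lemma op_step d l u v : 2 <= l -> ck_vertex d l u -> ck_op d l u v ->
  ck_vertex d l v /\ ck_path d l u v.
Proof.
move=> hl hu [->|[i [x [hi [hx [h1 [h2 ->]]]]]]].
  have [hv ha] := @rot1_vertex d l u hl hu.
  by split=> //; apply: rt_step.
exact: swap_path.
Qed.

Lemma ops_path d l u v : 2 <= l -> ck_reach_ops d l u v -> ck_vertex d l u ->
  ck_vertex d l v /\ ck_path d l u v.
Proof.
move=> hl; elim=> {u v} [u v hop|u|u w v _ IH1 _ IH2] hu.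
- exact: op_step.
- by split=> //; apply: rt_refl.
- have [hw p1] := IH1 hu; have [hv p2] := IH2 hw.
  by split=> //; apply: rt_trans p1 p2.
Qed.

Lemma arc_ops d l u v : 2 <= l -> ck_arc d l u v -> ck_reach_ops d l u v.
Proof.
move=> hl [hu [hv harc]].
have husz : size u = l by case: hu.
have hvsz : size v = l by case: hv.
case: u husz hu harc => [|a t] husz hu harc; first by rewrite /= in husz; lia.
have tsz : size t = l.-1 by rewrite /= in husz; lia.
have ev : v = rcons t (nth 0 v l.-1).
  apply: (@eq_from_nth _ 0); first by rewrite size_rcons tsz hvsz; lia.
  move=> i; rewrite hvsz => hi; rewrite nth_rcons tsz.
  case: ltnP => h; first by rewrite harc.
  have hil : i = l.-1 by lia.
  by rewrite hil eqxx.
set b := nth 0 v l.-1 in ev.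
have [_ _ hcv hlastv] := (proj1 (@vertex_alt d l v hl) hv).
apply: (@rt_trans _ _ _ (rcons t a)).
  by apply: rt_step; left; rewrite /rotation_op rot1_cons.
apply: rt_step; right; exists l.-1, b.
have hl2 : l.-2.+1 < l by lia.
split; first by lia.
split; first by case: hv => _ [/allP ha _]; apply: ha; apply: mem_nth; rewrite hvsz; lia.
split.
  rewrite mod_wrap; [|lia|lia].
  have -> : l.-1 + l - 1 - l = l.-2 by lia.
  rewrite nth_rcons tsz.
  have -> : l.-2 < l.-1 by lia.
  have := hcv _ hl2; rewrite ev nth_rcons tsz.
  have -> : l.-2 < l.-1 by lia.
  have -> : l.-2.+1 = l.-1 by lia.
  rewrite nth_rcons tsz ltnn eqxx => ne e; apply: ne; by rewrite e.
split.
  have hl1 : l.-1 + 1 = l by lia.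
  rewrite hl1 modnn.
  move: hlastv; rewrite {1 2}ev !nth_rcons tsz ltnn eqxx.
  have -> : 0 < l.-1 by lia.
  move=> ne e; apply: ne. by rewrite /b -e.
by rewrite -tsz set_nth_rcons -ev.
Qed.

Unset Implicit Arguments.

Theorem lemma3 (d l : nat) (u v : seq nat) :
  1 <= d -> 2 <= l -> ck_vertex d l u -> ck_vertex d l v ->
  (ck_path d l u v <-> ck_reach_ops d l u v).
Proof.
move=> _ hl hu _; split.
  elim=> {u v hu} [u v ha|u|u w v _ IH1 _ IH2].
  - exact: arc_ops.
  - exact: rt_refl.
  - exact: rt_trans IH1 IH2.
move=> h; exact: (proj2 (ops_path hl h hu)).
Qed.
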